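(* Let $Z\subseteq\Sigma^{\mathbb Z}$ be a sofic shift and $(C_1,\dots,C_K)$ a non-redundant graph-induced covering of $Z$. If $\mathcal H_1=(S,E)$ with $S=\{s_1,\dots,s_K\}$ and $\mathcal H_2=(Q,F)$ with $Q=\{q_1,\dots,q_K\}$ are two presentations of it, with $C_j=\mathcal Z(\mathcal H_1,s_j)=\mathcal Z(\mathcal H_2,q_j)$ for all $j$, then for all $j,l$ and $i\in\Sigma$: $(s_j,s_l,i)\in E$ if and only if $(q_j,q_l,i)\in F$. In particular the presentation is unique up to isomorphism.
   Context: $\Sigma$ is a nonempty countable alphabet; $\Sigma^{\mathbb Z}$ the bi-infinite sequences over $\Sigma$, $\sigma(\bar z)_k=z_{k+1}$. A labeled graph is $\mathcal G=(S,E)$ with $S$ finite, $E\subseteq S\times S\times\Sigma$; standing assumption: every node has at least one incoming and one outgoing edge. A bi-infinite walk labeled by $\bar z$ is $(e_k)_{k\in\mathbb Z}$ with $e_k=(s_k,s_{k+1},z_k)\in E$; it starts at $s$ if $s_0=s$. $\mathcal Z(\mathcal G)$ (resp. $\mathcal Z(\mathcal G,s)$) is the set of labels of all bi-infinite walks (resp. those starting at $s$). A sofic shift is a set of the form $\mathcal Z(\mathcal G)$. A graph-induced covering of $Z$ is a family $(C_1,\dots,C_K)$ of subsets of $Z$ such that some graph $\mathcal G$ with nodes $s_1,\dots,s_K$ satisfies $\mathcal Z(\mathcal G)=Z$ and $C_j=\mathcal Z(\mathcal G,s_j)$ (a presentation); it is non-redundant if $C_i\cap C_j=\emptyset$ for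 $i\ne j$. Graphs $(S,E)$, $(Q,F)$ are isomorphic if there is a bijection $\varphi:S\to Q$ with $(s,q,i)\in E\iff(\varphi(s),\varphi(q),i)\in F$. *)

(* Defs.v *)
From mathcomp Require Import all_boot.
From Stdlib Require Import ZArith.
Set Implicit Arguments.
Unset Strict Implicit.
Unset Printing Implicit Defensive.

Definition biseq (Sigma : Type) := Z -> Sigma.

Definition bset (Sigma : Type) := biseq Sigma -> Prop.

Definition bset_eq (Sigma : Type) (A B : bset Sigma) : Prop :=
  forall z, A z <-> B z.

Record lgraph (Sigma : Type) := LGraph {
  node : finType;
  edge : node -> node -> Sigma -> Prop
}.

Definition essential (Sigma : Type) (G : lgraph Sigma) : Prop :=
  forall s : node G,
    (exists (p : node G) (i : Sigma), edge p s i) /\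
    (exists (q : node G) (i : Sigma), edge s q i).

Definition walk_labeled (Sigma : Type) (G : lgraph Sigma)
    (st : Z -> node G) (z : biseq Sigma) : Prop :=
  forall k : Z, edge (st k) (st (k + 1)%Z) (z k).

Definition ZG (Sigma : Type) (G : lgraph Sigma) : bset Sigma :=
  fun z => exists st : Z -> node G, walk_labeled st z.

Definition ZGs (Sigma : Type) (G : lgraph Sigma) (s : node G) : bset Sigma :=
  fun z => exists st : Z -> node G, st 0%Z = s /\ walk_labeled st z.

Definition sofic (Sigma : Type) (X : bset Sigma) : Prop :=
  exists G : lgraph Sigma, essential G /\ bset_eq (ZG G) X.

Definition presentation (Sigma : Type) (K : nat) (X : bset Sigma)
    (C : 'I_K -> bset Sigma) (G : lgraph Sigma) (s : 'I_K -> node G) : Prop :=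
  essential G /\ bijective s /\ bset_eq (ZG G) X /\
  forall j, bset_eq (C j) (ZGs (s j)).

Definition graph_induced_covering (Sigma : Type) (K : nat) (X : bset Sigma)
    (C : 'I_K -> bset Sigma) : Prop :=
  exists (G : lgraph Sigma) (s : 'I_K -> node G), @presentation Sigma K X C G s.

Definition non_redundant (Sigma : Type) (K : nat) (C : 'I_K -> bset Sigma) : Prop :=
  forall i j : 'I_K, i <> j -> forall z, ~ (C i z /\ C j z).

Definition lgraph_iso (Sigma : Type) (G H : lgraph Sigma) : Prop :=
  exists phi : node G -> node H, bijective phi /\
    forall (s q : node G) (i : Sigma), edge s q i <-> edge (phi s) (phi q) i.

(* Main.v *)
Require Import Defs.
From mathcomp Require Import all_boot.
From Stdlib Require Import ZArith Lia ClassicalEpsilon.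

Section Aux.
Variable Sigma : Type.
Variable G : lgraph Sigma.
Hypothesis ess : essential G.

Lemma ext_walk (a b : node G) (i : Sigma) : edge a b i ->
  exists st z, st 0%Z = a /\ st 1%Z = b /\ z 0%Z = i /\ walk_labeled st z.
Proof.
move=> Hab.
have sx : forall x : node G, {p : node G * Sigma | edge x p.1 p.2}.
  move=> x; apply: constructive_indefinite_description.
  case: (ess x) => _ [q [l H]]; by exists (q, l).
have px : forall x : node G, {p : node G * Sigma | edge p.1 x p.2}.
  move=> x; apply: constructive_indefinite_description.
  case: (ess x) => [[q [l H]] _]; by exists (q, l).
pose f := fix f n := match n with 0 => b | n'.+1 => (proj1_sig (sx (f n'))).1 end.
pose g n := (proj1_sig (sx (f n))).2.
pose h := fix h n := match n with 0 => a | n'.+1 => (proj1_sig (px (h n'))).1 end.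
pose lb n := (proj1_sig (px (h n))).2.
have Hf : forall n, edge (f n) (f n.+1) (g n).
  move=> n; exact: (proj2_sig (sx (f n))).
have Hh : forall n, edge (h n.+1) (h n) (lb n).
  move=> n; exact: (proj2_sig (px (h n))).
exists (fun k => if (1 <=? k)%Z then f (Z.to_nat (k - 1)) else h (Z.to_nat (- k))).
exists (fun k => if (1 <=? k)%Z then g (Z.to_nat (k - 1))
         else if (k =? 0)%Z then i else lb (Z.to_nat (- k - 1))).
split; first by [].
split; first by [].
split; first by [].
move=> k.
case: (Z.leb_spec 1 k) => Hk.
- have -> : (1 <=? k + 1)%Z = true by apply/Z.leb_le; lia.
  have -> : Z.to_nat (k + 1 - 1) = (Z.to_nat (k - 1)).+1 by lia.
  exact: Hf.
- case: (Z.eqb_spec k 0) => Hk0.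
  + subst k => /=. exact: Hab.
  + have -> : (1 <=? k + 1)%Z = false by apply/Z.leb_gt; lia.
    have -> : Z.to_nat (- k) = (Z.to_nat (- (k + 1))).+1 by lia.
    have -> : Z.to_nat (- k - 1) = Z.to_nat (- (k + 1)) by lia.
    exact: Hh.
Qed.
End Aux.

Lemma shift_walk (Sigma : Type) (G : lgraph Sigma) st (z : biseq Sigma) :
  @walk_labeled Sigma G st z ->
  walk_labeled (fun k => st (k + 1)%Z) (fun k => z (k + 1)%Z).
Proof. move=> H k; exact: H. Qed.

Lemma edge_transfer (Sigma : Type) (K : nat) (X : bset Sigma) (C : 'I_K -> bset Sigma)
  (H1 : lgraph Sigma) (s : 'I_K -> node H1) (H2 : lgraph Sigma) (q : 'I_K -> node H2) :
  non_redundant C ->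
  @presentation Sigma K X C H1 s -> @presentation Sigma K X C H2 q ->
  forall j l i, edge (s j) (s l) i -> edge (q j) (q l) i.
Proof.
move=> NR [ess1 [bs [_ Cs]]] [ess2 [[qi qK qiK] [_ Cq]]] j l i He.
have [st [z [H0 [H1' [Hz Hw]]]]] := @ext_walk _ _ ess1 _ _ _ He.
have : ZGs (q j) z by apply/Cq/Cs; exists st.
case=> st' [H0' Hw'].
set m := qi (st' 1%Z).
have Cl : C l (fun k => z (k + 1)%Z).
  apply/Cs; exists (fun k => st (k + 1)%Z); split; first by [].
  exact: shift_walk.
have Cm : C m (fun k => z (k + 1)%Z).
  apply/Cq; exists (fun k => st' (k + 1)%Z); split; first by rewrite /m qiK.
  exact: shift_walk.
have Elm : l = m.
  case: (eqVneq l m) => // /eqP Hne; exfalso; exact: (NR _ _ Hne _ (conj Cl Cm)).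
have := Hw' 0%Z; rewrite H0' Hz /= Elm /m qiK; exact.
Qed.

Theorem mainTheorem4 (Sigma : countType) (a0 : Sigma) (K : nat)
    (X : bset Sigma) (C : 'I_K -> bset Sigma) :
  sofic X ->
  graph_induced_covering X C ->
  non_redundant C ->
  forall (H1 : lgraph Sigma) (s : 'I_K -> node H1)
         (H2 : lgraph Sigma) (q : 'I_K -> node H2),
  @presentation Sigma K X C H1 s ->
  @presentation Sigma K X C H2 q ->
  (forall (j l : 'I_K) (i : Sigma), edge (s j) (s l) i <-> edge (q j) (q l) i)
  /\ lgraph_iso H1 H2.
Proof.
move=> _ _ NR H1 s H2 q P1 P2.
have E : forall j l i, edge (s j) (s l) i <-> edge (q j) (q l) i.
  move=> j l i; split; [exact: (@edge_transfer Sigma K X C H1 s H2 q NR P1 P2 j l i) | exact: (@edge_transfer Sigma K X C H2 q H1 s NR P2 P1 j l i)].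
split=> //.
case: P1 => _ [[si sK siK] _]; case: P2 => _ [[qi qK qiK] _].
exists (fun x => q (si x)); split.
  exists (fun y => s (qi y)) => x /=; by rewrite ?qK ?sK.
move=> a b i; rewrite -{1}(siK a) -{1}(siK b); exact: E.
Qed.
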